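(* Consider the parallel sliding-window decoder applied to a decoding graph $G=(V,E)$ with positive edge weights, in which each window is decoded independently by a minimum-weight perfect matching (MWPM) inner decoder, and suppose the following consistency assumption holds: for any two adjacent (overlapping) windows with decoding graphs $G_1=(V_1,E_1)$, $G_2=(V_2,E_2)$ and inner-decoder corrections $C_1\subseteq E_1$, $C_2\subseteq E_2$, and for any $C_1'\subseteq C_1$ and $C_2'\subseteq C_2$, if $\partial C_1'=\partial C_2'$ then $C_1'=C_2'$. Then any physical error configuration $\mathcal{E}\subseteq E$ that causes this decoder to produce a non-trivial (non-empty) seam syndrome must have total weight at least $w_b/2$, where $w_b$ is the weighted buffer size.
   Context: A decoding graph $G=(V,E)$ is a (hyper)graph whose vertices are detectors and whose edges are independent physical error mechanisms; each edge $e$ carries a positive weight $w_e$ (more likely errors have smaller weight), and the weight of a set of edges is the sum of the weights of its edges. An error configuration $\mathcal{E}\subseteq E$ flips every detector incident to an odd number of its edges. For $C\subseteq E$, the boundary is $\partial C=\{v\in V : |\{e\in C : v\in e\}| \text{ is odd}\}$. Convention: ''virtual'' boundary vertices of the global decoding graph are not in $V$ (edges touching them are treated as edges of size one), so they never lie in any $\partial C$; however, the virtual vertices placed on the time boundary of an individual window are counted as vertices of that window and may lie in $\partial C$. Parallel sliding-window decoder: the edge set is partitioned into core regions; each window consists of a core region together with buffer regions around it, so adjacent windows overlap. Each window is decoded independently by the inner decoder, which, given the observed detection events in the window, outputs a correction $C_i\subseteq E_i$ whose boundary on the window's real vertices matches those detection events; for an MWPM inner decoder, $C_i$ has minimum total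 weight among all such edge sets. The corrections are restricted to the core regions and combined; the seam syndrome is the set of detection events at the seams between adjacent core regions that are left unexplained by the combined core corrections (i.e. that would have to be resolved by a subsequent merging step). The weighted buffer size $w_b$ is the shortest weighted distance, in a window's decoding graph, from a seam vertex to a virtual time-boundary vertex of that window. *)

(* Defs.v *)
From mathcomp Require Import all_boot all_order all_algebra.
Set Implicit Arguments.
Unset Strict Implicit.
Unset Printing Implicit Defensive.
Import Order.TTheory GRing.Theory Num.Theory.
Local Open Scope ring_scope.

Section SlidingWindow.
Variables (R : realFieldType) (V E I B : finType).
(* [inc e] : the (real) detectors of the global graph incident to edge e;
   virtual global boundary vertices are not in V. *)
Variable inc : E -> {set V}.
Variable w : E -> R.

Definition wsum (C : {set E}) : R := \sum_(e in C) w e.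

Definition bdry (C : {set E}) : {set V} :=
  [set v | odd #|[set e in C | v \in inc e]|].

Variable core : I -> {set E}.

Definition seam_of (i j : I) (v : V) : bool :=
  [&& i != j, [exists e in core i, v \in inc e] & [exists f in core j, v \in inc f]].

Definition seam_vertex (v : V) : bool := [exists i, exists j, seam_of i j v].

Definition adjacent (i j : I) : bool := [exists v, seam_of i j v].

(* ---- windows ----
   Window i has edge set [Ew i] (core + buffers), real vertices [Rv i], and
   its own virtual time-boundary vertices [inr (i, b)]; [tb i e] lists the
   time-boundary vertices that edge e is attached to in window i. *)
Variables (Ew : I -> {set E}) (Rv : I -> {set V}) (tb : I -> E -> {set B}).

Definition wvert := (V + (I * B))%type.

Definition winc (i : I) (e : E) : {set wvert} :=
  (@inl V (I * B)) @: (inc e :&: Rv i) :|: (fun b => @inr V (I * B) (i, b)) @: tb i e.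

Definition wbdry (i : I) (C : {set E}) : {set wvert} :=
  [set x | odd #|[set e in C | x \in winc i e]|].

Definition matching_graph : Prop :=
  (forall e, #|inc e| <= 2)%N /\ (forall i e, e \in Ew i -> #|winc i e| <= 2)%N.

Definition sliding_windows : Prop :=
  ((forall e, exists i, e \in core i) /\
      (forall i j e, e \in core i -> e \in core j -> i = j)) /\
  [/\
      (forall i, core i \subset Ew i),
      (forall i e, e \in core i -> inc e \subset Rv i),
      (forall i e v, v \in Rv i -> v \in inc e -> e \in Ew i) &
      (forall i e, e \in Ew i -> (tb i e != set0) = ~~ (inc e \subset Rv i))].

Definition window_valid (synd : {set V}) (i : I) (C : {set E}) : bool :=
  (C \subset Ew i) && [forall v in Rv i, (inl v \in wbdry i C) == (v \in synd)].

Definition mwpm_output (synd : {set V}) (i : I) (C : {set E}) : Prop :=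
  window_valid synd i C /\
  (forall C', window_valid synd i C' -> wsum C <= wsum C').

Definition combined (C : I -> {set E}) : {set E} := \bigcup_(i : I) (C i :&: core i).

Definition seam_syndrome (C : I -> {set E}) (err : {set E}) : {set V} :=
  [set v | seam_vertex v && ((v \in bdry (combined C)) != (v \in bdry err))].

Definition consistent (C : I -> {set E}) : Prop :=
  forall i j, adjacent i j ->
  forall C1 C2 : {set E}, C1 \subset C i -> C2 \subset C j ->
  wbdry i C1 = wbdry j C2 -> C1 = C2.

Fixpoint wwalk (i : I) (x : wvert) (p : seq (E * wvert)) : bool :=
  if p is (e, y) :: p' then
    [&& e \in Ew i, x \in winc i e, y \in winc i e & wwalk i y p']
  else true.

Definition walk_weight (p : seq (E * wvert)) : R := \sum_(ey <- p) w ey.1.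

(* [wb] is at most the weighted buffer size: every walk, in the decoding graph
   of window i, from a seam vertex of core i to a virtual time-boundary vertex
   of window i weighs at least wb.  (w_b is the infimum of these weights.) *)
Definition buffer_lower_bound (wb : R) : Prop :=
  forall (i : I) (s : V) (b : B) (p : seq (E * wvert)),
    seam_vertex s -> [exists e in core i, s \in inc e] ->
    wwalk i (inl s) p -> last (inl s) (map snd p) = inr (i, b) ->
    wb <= walk_weight p.

End SlidingWindow.

(* Main.v *)
Require Import Defs.
From mathcomp Require Import all_boot all_order all_algebra.
From Stdlib Require Import ClassicalEpsilon.
From mathcomp Require Import lra.
Set Implicit Arguments. Unset Strict Implicit. Unset Printing Implicit Defensive.
Import Order.TTheory GRing.Theory Num.Theory.
Local Open Scope ring_scope.

Section Aux.
Variables (R : realFieldType) (V E I B : finType)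
  (inc : E -> {set V}) (w : E -> R)
  (core Ew : I -> {set E}) (Rv : I -> {set V}) (tb : I -> E -> {set B}).
Hypothesis wpos : forall e, 0 < w e.

Lemma wsum_ge0 C : 0 <= wsum w C.
Proof. by apply: sumr_ge0 => e _; apply: ltW. Qed.

Lemma wsum_sub (A C : {set E}) : A \subset C -> wsum w A <= wsum w C.
Proof.
move=> sAC; rewrite /wsum [X in _ <= X](big_setID A) /=.
rewrite (_ : C :&: A = A); last by apply/setIidPr.
rewrite lerDl.
exact: wsum_ge0.
Qed.

Lemma wsumU (A C : {set E}) : wsum w (A :|: C) <= wsum w A + wsum w C.
Proof.
have h1 : wsum w (A :|: C) = wsum w A + wsum w ((A :|: C) :\: A).
  rewrite /wsum (big_setID A) /=; congr (_ + _); apply: eq_bigl => x.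
  by rewrite !inE; case: (x \in A); rewrite ?andbT ?andbF ?orbT.
rewrite h1 lerD2l; apply: wsum_sub.
by apply/subsetP => x; rewrite !inE => /andP [/negPf -> /=].
Qed.

Lemma wsumU1 e (U : {set E}) : e \notin U -> wsum w (e |: U) = w e + wsum w U.
Proof. by move=> eU; rewrite /wsum big_setU1. Qed.

Lemma winc_inl i e x :
  (inl x \in winc inc Rv tb i e) = (x \in inc e) && (x \in Rv i).
Proof.
rewrite /winc inE mem_imset; last by move=> a b [].
rewrite inE; case: (_ && _) => //=.
by apply/negP => /imsetP [b _].
Qed.

Lemma winc_inr i e j b :
  (inr (j, b) \in winc inc Rv tb i e) = (j == i) && (b \in tb i e).
Proof.
rewrite /winc inE; case: imsetP => [[x _ //]|_] /=.
apply/imsetP/idP => [[b' hb [-> ->]]|/andP [/eqP -> hb]]; first by rewrite eqxx.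
by exists b.
Qed.


Lemma wbdry_inl i C x : x \in Rv i ->
  (inl x \in wbdry inc Rv tb i C) = (x \in bdry inc C).
Proof.
move=> xR; rewrite /wbdry /bdry !inE; congr (odd _); apply: eq_card => e.
by rewrite in_set [in RHS]in_set winc_inl xR andbT.
Qed.

Lemma wwalk_rcons i x q e y :
  wwalk inc Ew Rv tb i x (rcons q (e, y)) =
  wwalk inc Ew Rv tb i x q && [&& e \in Ew i, last x (map snd q) \in winc inc Rv tb i e & y \in winc inc Rv tb i e].
Proof.
elim: q x => [|[e' y'] q IH] x /=; first by rewrite !andbT.
by rewrite IH !andbA.
Qed.

Lemma walk_weight_rcons q e (y : wvert V I B) :
  walk_weight w (rcons q (e, y)) = walk_weight w q + w e.
Proof. by rewrite /walk_weight big_rcons. Qed.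

End Aux.

Section Key.
Variables (R : realFieldType) (V E I B : finType)
  (inc : E -> {set V}) (w : E -> R)
  (core Ew : I -> {set E}) (Rv : I -> {set V}) (tb : I -> E -> {set B}).
Hypothesis wpos : forall e, 0 < w e.
Hypothesis SW : sliding_windows inc core Ew Rv tb.
Variables (err : {set E}) (C : I -> {set E}) (wb : R) (k l : I) (v : V).
Hypothesis hC : forall i, mwpm_output inc w Ew Rv tb (bdry inc err) i (C i).
Hypothesis hbuf : buffer_lower_bound inc w core Ew Rv tb wb.
Hypothesis hsv : seam_vertex inc core v.
Hypothesis hvk : [exists e in core k, v \in inc e].
Hypothesis hvl : [exists e in core l, v \in inc e].
Hypothesis hF : wsum w (C k) + wsum w (C l) < wb.

Let F := (C k :\: C l) :|: (C l :\: C k).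
Let covered (U : {set E}) z := (z == v) || [exists e in U, z \in inc e].
Let Inv i (U : {set E}) := forall z, covered U z -> z \in Rv i /\
  exists q, [/\ wwalk inc Ew Rv tb i (inl v) q,
     last (inl v) (map snd q) = inl z & walk_weight w q <= wsum w U].

Lemma v_Rv i : [exists e in core i, v \in inc e] -> v \in Rv i.
Proof.
case: SW => _ [_ h2 _ _] /existsP [e /andP [he hv]].
exact: (subsetP (h2 _ _ he)).
Qed.

Lemma wsumF : wsum w F < wb.
Proof.
apply: le_lt_trans hF; apply: le_trans (wsumU wpos _ _).
apply: wsum_sub => //; apply/subsetP => e; rewrite !inE.
by case: (e \in C k); case: (e \in C l).
Qed.

Lemma Inv0 i : [exists e in core i, v \in inc e] -> Inv i set0.
Proof.
move=> hvi z; rewrite /covered.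
case/orP => [/eqP ->|/existsP [e]]; last by rewrite inE.
split; first exact: v_Rv.
exists [::]; split => //; rewrite /walk_weight big_nil /wsum big_set0 //.
Qed.

Lemma Inv_step i (U : {set E}) (e : E) (x : V) : [exists e in core i, v \in inc e] ->
  U \subset F -> Inv i U -> e \in F -> covered U x -> x \in inc e ->
  Inv i (e |: U).
Proof.
move=> hvi sUF hU eF cx xe z cz.
case cUz: (covered U z).
  have [zR [q [q1 q2 q3]]] := hU z cUz; split => //; exists q; split => //.
  apply: (le_trans q3); apply: wsum_sub => //; exact: subsetUr.
have covU : forall e', e' \in U -> z \in inc e' -> covered U z.
  by move=> e' e'U ze'; rewrite /covered; apply/orP; right; apply/existsP; exists e'; rewrite e'U.
have ze : z \in inc e.
  move: cz; rewrite /covered; case/orP => [zv|/existsP [e' /andP [e'U ze']]].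
    by move: cUz; rewrite /covered zv.
  move: e'U; rewrite !inE => /orP [/eqP <- //|e'U].
  by rewrite (covU e') in cUz.
have eU : e \notin U.
  by apply/negP => eU; rewrite (covU e) in cUz.
have [xR [q [q1 q2 q3]]] := hU x cx.
case: SW => _ [_ h2 h3 h4].
have eE : e \in Ew i by apply: (h3 i e x).
have wle : walk_weight w q + w e <= wsum w (e |: U).
  by rewrite wsumU1 // addrC lerD2l.
have wUF : wsum w (e |: U) < wb.
  apply: le_lt_trans wsumF; apply: wsum_sub => //.
  by rewrite subUset sub1set eF.
case zR: (z \in Rv i).
  split => //; exists (rcons q (e, inl z)); split.
  - by rewrite wwalk_rcons q1 eE q2 !winc_inl ze zR xe xR.
  - by rewrite map_rcons last_rcons.
  - by rewrite walk_weight_rcons.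
exfalso.
have : tb i e != set0.
  rewrite h4 //; apply/negP => /subsetP /(_ z ze); by rewrite zR.
case/set0Pn => b hb.
have := hbuf (i := i) (s := v) (b := b) (p := rcons q (e, inr (i, b))) hsv hvi.
rewrite wwalk_rcons q1 eE q2 winc_inl xe xR winc_inr eqxx hb map_rcons last_rcons.
move=> /(_ isT erefl); rewrite walk_weight_rcons => hw.
have := le_lt_trans (le_trans hw wle) wUF; by rewrite ltxx.
Qed.


Definition pb (P : Prop) : bool := if excluded_middle_informative P then true else false.
Lemma pbP (P : Prop) : pb P <-> P.
Proof. by rewrite /pb; case: excluded_middle_informative. Qed.

Let S : {set V} := [set z : V | pb (exists U : {set E}, [/\ U \subset F, Inv k U, Inv l U & covered U z])].

Lemma S_v : v \in S.
Proof.
rewrite inE; apply/pbP; exists set0; split.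
- exact: sub0set.
- exact: Inv0.
- exact: Inv0.
- by rewrite /covered eqxx.
Qed.

Lemma S_R (z : V) : z \in S -> z \in Rv k /\ z \in Rv l.
Proof.
rewrite inE => /pbP [U [_ hk hl cz]].
by have [? _] := hk z cz; have [? _] := hl z cz.
Qed.

Lemma S_cl (z : V) (e : E) (y : V) : z \in S -> e \in F -> z \in inc e -> y \in inc e -> y \in S.
Proof.
move=> zS eF ze ye; move: zS; rewrite inE => /pbP [U [sUF hk hl cz]]; rewrite inE; apply/pbP; exists (e |: U); split.
- by rewrite subUset sub1set eF.
- exact: (Inv_step hvk sUF hk eF cz ze).
- exact: (Inv_step hvl sUF hl eF cz ze).
- by rewrite /covered; apply/orP; right; apply/existsP; exists e; rewrite !inE eqxx.
Qed.

Let Y : {set E} := [set e | inc e \subset S].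

Lemma FY (e : E) (z : V) : e \in F -> z \in S -> z \in inc e -> e \in Y.
Proof. by move=> eF zS ze; rewrite inE; apply/subsetP => y ye; apply: (S_cl zS eF ze ye). Qed.

Lemma valid_bdry (i : I) (u : V) : u \in Rv i -> (u \in bdry inc (C i)) = (u \in bdry inc err).
Proof.
move=> uR; case: (hC i) => /andP [_ /forallP h] _.
by have := h u; rewrite uR /= => /eqP; rewrite wbdry_inl.
Qed.

Lemma CEw i : C i \subset Ew i.
Proof. by case: (hC i) => /andP []. Qed.

Lemma tb0 (i : I) (e : E) : e \in Ew i -> inc e \subset Rv i -> tb i e = set0.
Proof.
case: SW => _ [_ _ _ h4] eE sR; apply/eqP; apply/negPn.
by rewrite h4 // sR.
Qed.

Lemma YR (i : I) (e : E) : (forall z, z \in S -> z \in Rv i) -> e \in Y -> inc e \subset Rv i.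
Proof. by move=> hS; rewrite inE => /subsetP h; apply/subsetP => z /h /hS. Qed.

Hypothesis hcons : consistent inc core Rv tb C.
Hypothesis hadj : adjacent inc core k l.

Lemma agree (e : E) : v \in inc e -> (e \in C k) = (e \in C l).
Proof.
move=> ve.
have SRk : forall z, z \in S -> z \in Rv k by move=> z /S_R [].
have SRl : forall z, z \in S -> z \in Rv l by move=> z /S_R [].
have eq1 : C k :&: Y = C l :&: Y.
  apply: (hcons hadj (subsetIl _ _) (subsetIl _ _)).
  apply/setP => x; case: x => [u|[j b]].
  - case uS: (u \in S).
    + rewrite !wbdry_inl ?SRk ?SRl //.
      set Ak := [set e0 in C k | u \in inc e0].
      set Al := [set e0 in C l | u \in inc e0].
      have h1 : forall i, [set e0 in C i :&: Y | u \in inc e0] = [set e0 in C i | u \in inc e0] :&: Y.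
        by move=> i; apply/setP => e0; rewrite !inE andbAC.
      have hd : Ak :\: Y = Al :\: Y.
        apply/setP => e0; rewrite !in_setD; case e0Y: (e0 \in Y) => //=; rewrite !in_set.
        case ue0: (u \in inc e0); rewrite ?andbF //= !andbT.
        case ek: (e0 \in C k); case el: (e0 \in C l) => //.
        + have eF0 : e0 \in F by rewrite !inE ek el.
          by rewrite (FY eF0 uS ue0) in e0Y.
        + have eF0 : e0 \in F by rewrite !inE ek el.
          by rewrite (FY eF0 uS ue0) in e0Y.
      have hv := @valid_bdry k u (SRk _ uS); rewrite -(@valid_bdry l u (SRl _ uS)) in hv.
      move: hv; rewrite /bdry !in_set !h1 -/Ak -/Al.
      rewrite -(cardsID Y Ak) -(cardsID Y Al) !oddD hd.
      by case: (odd #|Al :\: Y|); rewrite ?addbT ?addbF // => /negb_inj.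
    + rewrite /wbdry !in_set.
      have h0 : forall i, [set e0 in C i :&: Y | inl u \in winc inc Rv tb i e0] = set0.
        move=> i; apply/setP => e0; rewrite in_set [in RHS]inE winc_inl inE.
        case e0Y: (e0 \in Y); rewrite ?andbF ?andbT //=.
        case ue: (u \in inc e0); rewrite ?andbF //.
        by move: e0Y; rewrite inE => /subsetP /(_ u ue); rewrite uS.
      by rewrite !h0.
  - rewrite /wbdry !in_set.
    have h0 : forall i, (forall z, z \in S -> z \in Rv i) ->
       [set e0 in C i :&: Y | inr (j, b) \in winc inc Rv tb i e0] = set0.
      move=> i hS; apply/setP => e0; rewrite in_set [in RHS]inE winc_inr inE.
      case e0C: (e0 \in C i) => //=; case e0Y: (e0 \in Y) => //=.
      by rewrite tb0 ?inE ?andbF // ?(subsetP (CEw i)) // (YR hS).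
    by rewrite (h0 k SRk) (h0 l SRl).
have eY : e \in F -> e \in Y by move=> eF; apply: (FY eF S_v ve).
have h : (e \in C k :&: Y) = (e \in C l :&: Y) by rewrite eq1.
rewrite !in_setI in h.
case eYb: (e \in Y); first by rewrite eYb !andbT in h.
case ek: (e \in C k); case el: (e \in C l) => //.
- have eF0 : e \in F by rewrite !inE ek el.
  by rewrite (eY eF0) in eYb.
- have eF0 : e \in F by rewrite !inE ek el.
  by rewrite (eY eF0) in eYb.
Qed.

End Key.

Theorem theorem1 (R : realFieldType) (V E I B : finType)
  (inc : E -> {set V}) (w : E -> R)
  (core Ew : I -> {set E}) (Rv : I -> {set V}) (tb : I -> E -> {set B})
  (C : I -> {set E}) (err : {set E}) :
  (forall e, 0 < w e) ->
  matching_graph inc Ew Rv tb ->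
  sliding_windows inc core Ew Rv tb ->
  (forall i, mwpm_output inc w Ew Rv tb (bdry inc err) i (C i)) ->
  consistent inc core Rv tb C ->
  seam_syndrome inc core C err != set0 ->
  forall wb : R, buffer_lower_bound inc w core Ew Rv tb wb ->
  wb / 2 <= wsum w err.
Proof.
move=> wpos _ SW hC hcons hsyn wb hbuf.
rewrite leNgt; apply/negP => hlt.
move/set0Pn: hsyn => [v]; rewrite inE => /andP [sv hv].
have SW' := SW; case: SW' => [[cov cuniq] [h1 h2 h3 h4]].
have hCw : forall i, wsum w (C i) <= wsum w err.
  move=> i; apply: (le_trans (y := wsum w (err :&: Ew i))); last first.
    by apply: wsum_sub => //; apply: subsetIl.
  case: (hC i) => _; apply; apply/andP; split; first exact: subsetIr.
  apply/forallP => u; apply/implyP => uR; rewrite wbdry_inl //.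
  rewrite /bdry !in_set; apply/eqP; congr (odd _); apply: eq_card => e.
  rewrite !in_set; case ue: (u \in inc e); rewrite ?andbF ?andbT //.
  case ee: (e \in err); rewrite ?andbF ?andbT //=.
  exact: (h3 i e u uR ue).
have hF : forall k l, wsum w (C k) + wsum w (C l) < wb.
  move=> k l; have := hCw k; have := hCw l; lra.
have sv' := sv.
move: sv' => /existsP [i0 /existsP [j0 /and3P [ne hi hj]]].
have hagree : forall k, [exists e in core k, v \in inc e] ->
    forall e, v \in inc e -> (e \in C i0) = (e \in C k).
  move=> k hk e ve; case: (eqVneq i0 k) => [<- //|nk].
  apply: (agree wpos SW hC hbuf sv hi hk (hF i0 k) hcons) => //.
  by apply/existsP; exists v; rewrite /seam_of nk hi hk.
have hcomb : forall e, v \in inc e -> (e \in combined core C) = (e \in C i0).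
  move=> e ve; have [k ek] := cov e.
  have hk : [exists e in core k, v \in inc e] by apply/existsP; exists e; rewrite ek ve.
  rewrite (hagree k hk e ve); apply/bigcupP/idP.
  - by move=> [i _ /setIP [eCi eci]]; rewrite (cuniq _ _ _ ek eci).
  - by move=> eCk; exists k => //; rewrite inE eCk ek.
have vR : v \in Rv i0.
  by move: hi => /existsP [e /andP [ec ve]]; apply: (subsetP (h2 _ _ ec)).
have e1 : (v \in bdry inc (combined core C)) = (v \in bdry inc (C i0)).
  rewrite /bdry !in_set; congr (odd _); apply: eq_card => e.
  rewrite !in_set; case ve: (v \in inc e); rewrite ?andbF ?andbT //.
  exact: hcomb.
have e2 : (v \in bdry inc (C i0)) = (v \in bdry inc err).
  case: (hC i0) => /andP [_ /forallP h] _.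
  by have := h v; rewrite vR /= => /eqP; rewrite wbdry_inl.
by rewrite e1 e2 eqxx in hv.
Qed.
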